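(* Let $0\le s<r<n$, let $t\ge 4$ be an integer, and let $x$ be any vertex of $G(n,r,s)$. Then $$0\le\frac{\operatorname{hom}(C_t,G(n,r,s))-\operatorname{mon}(C_t,G(n,r,s))}{\operatorname{hom}(C_t,G(n,r,s))}\le t\sum_{k=2}^{t-2}\frac{P^k(x,x)\,P^{t-k}(x,x)}{P^t(x,x)}.$$
   Context: For integers $0\le s<r<n$, $G(n,r,s)$ is the simple graph whose vertices are the $r$-element subsets of $\{1,\dots,n\}$, with $x,y$ adjacent iff $|x\cap y|=s$; it is vertex-transitive and regular of degree $N_1=\binom{r}{s}\binom{n-r}{r-s}$. $C_t$ is the cycle on $t$ vertices; $\operatorname{hom}$ and $\operatorname{mon}$ count homomorphisms and injective homomorphisms. $P^k(x,y)$ denotes the $k$-step transition probability from $x$ to $y$ of the simple random walk on $G(n,r,s)$ (at each step move to a uniformly random neighbour of the current vertex). *)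

(* Defs.v *)
From mathcomp Require Import all_boot all_order all_algebra.
Set Implicit Arguments. Unset Strict Implicit. Unset Printing Implicit Defensive.
Import Order.TTheory GRing.Theory Num.Theory.

(* Vertices of G(n,r,s): r-element subsets of {1..n}, modelled as subsets of 'I_n. *)
Definition gvert (n r : nat) := {A : {set 'I_n} | #|A| == r}.

Definition gadj (n r s : nat) (x y : gvert n r) : bool :=
  #|val x :&: val y| == s.

(* hom(C_t, G): maps from the vertices 'I_t of the cycle C_t (i ~ i+1 mod t)
   sending every edge of C_t to an edge of G. *)
Definition homC (n r s t : nat) : nat :=
  #|[set f : {ffun 'I_t -> gvert n r} | [forall i : 'I_t, gadj s (f i) (f (ordS i))]]|.

Definition monC (n r s t : nat) : nat :=
  #|[set f : {ffun 'I_t -> gvert n r} |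
      [forall i : 'I_t, gadj s (f i) (f (ordS i))] && injectiveb f]|.

Definition gdeg (n r s : nat) (x : gvert n r) : nat := #|[set y | gadj s x y]|.

Definition trans (R : fieldType) (n r s : nat) (x y : gvert n r) : R :=
  (gadj s x y)%:R / (gdeg s x)%:R.

Fixpoint transk (R : fieldType) (n r s : nat) (k : nat) (x y : gvert n r) : R :=
  match k with
  | 0 => (x == y)%:R
  | k'.+1 => \sum_(z : gvert n r) trans R s x z * transk R s k' z y
  end.

(* Main.v *)
Require Import Defs.
From mathcomp Require Import all_boot all_order all_algebra.
From Stdlib Require Import Lia.
From mathcomp Require Import zify ring.
Set Implicit Arguments. Unset Strict Implicit. Unset Printing Implicit Defensive.
Import Order.TTheory GRing.Theory Num.Theory.

Definition consf (T : finType) m (v : T) (g : {ffun 'I_m -> T}) : {ffun 'I_m.+1 -> T} :=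
  [ffun i => if unlift ord0 i is Some j then g j else v].

Lemma sum_consf (T : finType) m (F : {ffun 'I_m.+1 -> T} -> nat) :
  \sum_f F f = \sum_(v : T) \sum_(g : {ffun 'I_m -> T}) F (consf v g).
Proof.
rewrite pair_big /=.
pose h (p : T * {ffun 'I_m -> T}) := consf p.1 p.2.
pose hi (f : {ffun 'I_m.+1 -> T}) := (f ord0, [ffun j => f (lift ord0 j)]).
rewrite (reindex h) //=.
exists hi => [[v g] _ | f _].
  rewrite /hi /h /consf /= !ffunE unlift_none; congr pair.
  by apply/ffunP => j; rewrite !ffunE liftK.
rewrite /hi /h /consf /=; apply/ffunP => i; rewrite ffunE.
case: unliftP => [j -> | ->]; by rewrite ?ffunE.
Qed.




Fixpoint Nw (T : finType) (e : rel T) k (y z : T) : nat :=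
  if k is k'.+1 then \sum_w e y w * Nw e k' w z else (y == z).

Arguments Nw {T} e k y z : simpl never.
Lemma NwS (T : finType) (e : rel T) k y z : Nw e k.+1 y z = \sum_w e y w * Nw e k w z.
Proof. by []. Qed.
Lemma Nw0 (T : finType) (e : rel T) y z : Nw e 0 y z = (y == z).
Proof. by []. Qed.

Definition ext (T : finType) m (y : T) (g : {ffun 'I_m -> T}) (z : T) (j : nat) : T :=
  if j is j'.+1 then odflt z (omap g (insub j' : option 'I_m)) else y.

Arguments ext {T m} y g z j : simpl never.

Definition wt (T : finType) (e : rel T) m y (g : {ffun 'I_m -> T}) z : nat :=
  \prod_(i < m.+1) e (ext y g z i) (ext y g z i.+1).

Lemma ext_consf (T : finType) (m : nat) (y v : T) (g : {ffun 'I_m -> T}) z j :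
  ext y (consf v g) z j.+1 = ext v g z j :> T.
Proof.
rewrite /ext /consf; case: j => [|j].
  case: insubP => [i _ Ei | ] //=; rewrite ffunE.
  by rewrite (_ : i = ord0) ?unlift_none //; apply: val_inj.
case: insubP => [i Hi Ei | Hn] /=.
  rewrite ffunE; case: insubP => [k Hk Ek | Hn] /=.
    by rewrite (_ : i = lift ord0 k) ?liftK //; apply: val_inj; rewrite /= Ek.
  by move: Hi Hn; rewrite ltnS => ->.
case: insubP => [k Hk Ek | //] /=.
by move: Hn; rewrite ltnS Hk.
Qed.

Lemma ext_last (T : finType) (m : nat) (y : T) (g : {ffun 'I_m -> T}) z : ext y g z m.+1 = z.
Proof. by rewrite /ext insubF // ltnn. Qed.
Lemma ext0 (T : finType) (m : nat) (y : T) (g : {ffun 'I_m -> T}) z : ext y g z 0 = y.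
Proof. by []. Qed.

Lemma wt_consf (T : finType) (e : rel T) (m : nat) (y v : T) (g : {ffun 'I_m -> T}) z :
  wt e y (consf v g) z = e y v * wt e v g z.
Proof.
rewrite /wt big_ord_recl.
have E0 : ext y (consf v g) z 1 = v by rewrite ext_consf.
rewrite E0 /= ; congr (_ * _).
by apply: eq_bigr => i _; rewrite /= !ext_consf.
Qed.

Lemma OW (T : finType) (e : rel T) m y z :
  \sum_(g : {ffun 'I_m -> T}) wt e y g z = Nw e m.+1 y z.
Proof.
elim: m y => [|m IH] y.
  rewrite (eq_bigr (fun _ => (e y z : nat))); last first.
    by move=> g _; rewrite /wt big_ord1 /= ext_last.
  rewrite sum_nat_const card_ffun card_ord expn0 mul1n /=.
  rewrite NwS (bigD1 z) //= Nw0 eqxx muln1 big1 ?addn0 // => w /negbTE; rewrite Nw0 => ->; by rewrite muln0.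
rewrite sum_consf NwS /=; apply: eq_bigr => v _.
under eq_bigr do rewrite wt_consf.
by rewrite -big_distrr /= IH.

Qed.

Ltac fin0 := rewrite ?Nw0; let H := fresh "H" in let H' := fresh "H" in
  case: eqVneq => [->|H]; [by rewrite ?eqxx ?mul1n ?muln1 |
   have H' := H; rewrite eq_sym in H'; by rewrite ?(negbTE H) ?(negbTE H') ?mul0n ?muln0].

Lemma Nw_split (T : finType) (e : rel T) a b y z :
  Nw e (a + b) y z = \sum_w Nw e a y w * Nw e b w z.
Proof.
elim: a y => [|a IH] y /=.
  rewrite add0n (bigD1 y) //= Nw0 eqxx mul1n big1 ?addn0 // => w /negbTE.
  by rewrite Nw0 eq_sym => ->.
rewrite addSn NwS.
under eq_bigr do rewrite IH big_distrr /=.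
rewrite exchange_big /=; apply: eq_bigr => w _.
by rewrite NwS big_distrl /=; apply: eq_bigr => u _; rewrite mulnA.
Qed.

Lemma PW1 (T : finType) (e : rel T) m a y w z : a <= m.+1 ->
  \sum_(g : {ffun 'I_m -> T}) (ext y g z a == w) * wt e y g z
  = Nw e a y w * Nw e (m.+1 - a) w z.
Proof.
elim: m a y => [|m IH] a y Ha.
  case: a Ha => [|[|//]] _.
    under eq_bigr do rewrite ext0.
    rewrite -big_distrr /= OW ?subn0; fin0.
  under eq_bigr do rewrite ext_last.
  rewrite -big_distrr /= OW ?subnn; fin0.
case: a Ha => [|a] Ha.
  under eq_bigr do rewrite ext0.
  rewrite -big_distrr /= OW ?subn0; fin0.
move: Ha; rewrite ltnS leq_eqVlt => /orP [/eqP ->|Ha]; last first.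
  rewrite sum_consf.
  under eq_bigr do under eq_bigr do rewrite ext_consf wt_consf mulnCA.
  under eq_bigr do rewrite -big_distrr /= IH 1?ltnW //.
  rewrite /= NwS big_distrl /= subSS; apply: eq_bigr => v _; by rewrite mulnA.
under eq_bigr do rewrite ext_last.
rewrite -big_distrr /= OW ?subnn; fin0.
Qed.

Lemma PW2 (T : finType) (e : rel T) m a b y w1 w2 z : a <= b -> b <= m.+1 ->
  \sum_(g : {ffun 'I_m -> T}) (ext y g z a == w1) * ((ext y g z b == w2) * wt e y g z)
  = Nw e a y w1 * (Nw e (b - a) w1 w2 * Nw e (m.+1 - b) w2 z).
Proof.
elim: m a b y => [|m IH] a b y Hab Hb.
  case: a Hab => [|a] Hab.
    under eq_bigr do rewrite ext0.
    rewrite -big_distrr /= PW1 // ?subn0; fin0.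
  case: b Hab Hb => [//|[|//]] Hab _.
  have -> : a = 0 by case: a Hab.
  under eq_bigr do rewrite ext_last.
  rewrite -!big_distrr /= OW ?subnn !Nw0.
  case: (eqVneq z w2) => [<-|H]; last by rewrite ?mul0n ?muln0.
  rewrite ?eqxx ?mul1n ?muln1.
  case: (eqVneq z w1) => [<-|H]; first by rewrite ?eqxx ?mul1n ?muln1.
  by rewrite ?mul0n ?muln0.
case: a Hab => [|a] Hab.
  under eq_bigr do rewrite ext0.
  rewrite -big_distrr /= PW1 // ?subn0; fin0.
move: Hb; rewrite leq_eqVlt => /orP [/eqP Eb|Hb]; last first.
  case: b Hab Hb => [//|b] Hab Hb.
  have Hab' : a <= b := Hab.
  have Hb' : b <= m.+1 by apply: ltnW; exact: Hb.
  rewrite sum_consf.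
  under eq_bigr do under eq_bigr do rewrite !ext_consf wt_consf (mulnCA (_ == w2)) mulnCA.
  under eq_bigr do rewrite -big_distrr /= (IH _ _ _ Hab' Hb').
  rewrite NwS big_distrl /= !subSS; apply: eq_bigr => v _; by rewrite !mulnA.
subst b.
under eq_bigr do rewrite ext_last mulnCA.
rewrite -big_distrr /= PW1 // ?subnn Nw0.
case: (eqVneq z w2) => [<-|H]; by rewrite ?eqxx ?mul1n ?muln1 ?mul0n ?muln0.
Qed.

Lemma card_sum (T : finType) (P : pred T) : #|[set x | P x]| = \sum_x P x.
Proof.
rewrite -sum1_card big_mkcond /=; apply: eq_bigr => x _; by rewrite inE; case: (P x).
Qed.

Lemma forall_prod (I : finType) (b : pred I) : ([forall i, b i] : nat) = \prod_i (b i : nat).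
Proof.
case: forallP => H; first by rewrite big1 // => i _; rewrite H.
have [i Hi] : exists i, ~~ b i.
  by apply/existsP; apply: contraT; rewrite negbK => /forallP.
by rewrite (bigD1 i) //= (negbTE Hi).
Qed.

Lemma consf_ext (T : finType) m (v : T) (g : {ffun 'I_m -> T}) z (i : 'I_m.+1) :
  consf v g i = ext v g z i.
Proof.
case: i => [[|j] Hj]; rewrite /consf ffunE.
  by rewrite (_ : Ordinal Hj = ord0) ?unlift_none //; apply: val_inj.
have Hj' : j < m by [].
rewrite (_ : Ordinal Hj = lift ord0 (Ordinal Hj')) ?liftK; last by apply: val_inj.
rewrite /ext /=; case: insubP => [k _ Ek|]; last by rewrite Hj'.
by congr (g _); apply: val_inj; rewrite /= Ek.
Qed.

Lemma consf_ordS (T : finType) m (v : T) (g : {ffun 'I_m -> T}) (i : 'I_m.+1) :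
  consf v g (ordS i) = ext v g v i.+1.
Proof.
rewrite (consf_ext _ _ v) /=; case: (ltngtP i m) (ltn_ord i) => [H _|H Hi|H _].
- by rewrite modn_small.
- by move: Hi; rewrite ltnS leqNgt H.
- by rewrite H modnn ext_last.
Qed.

Definition hb (T : finType) (e : rel T) m (f : {ffun 'I_m -> T}) :=
  [forall i, e (f i) (f (ordS i))].

Lemma hb_consf (T : finType) (e : rel T) m (v : T) (g : {ffun 'I_m -> T}) :
  (hb e (consf v g) : nat) = wt e v g v.
Proof.
rewrite /hb forall_prod /wt; apply: eq_bigr => i _.
by rewrite consf_ordS (consf_ext _ _ v).
Qed.

Lemma hom_count (T : finType) (e : rel T) m :
  #|[set f : {ffun 'I_m.+1 -> T} | hb e f]| = \sum_y Nw e m.+1 y y.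
Proof.
rewrite card_sum sum_consf; apply: eq_bigr => y _.
under eq_bigr do rewrite hb_consf.
by rewrite OW.
Qed.

Lemma pair_count (T : finType) (e : rel T) m (i j : 'I_m.+1) : i < j ->
  \sum_(f : {ffun 'I_m.+1 -> T}) hb e f * (f i == f j) =
  \sum_w Nw e (j - i) w w * Nw e (m.+1 - (j - i)) w w.
Proof.
move=> Hij.
rewrite sum_consf.
have E : forall (a b : T), ((a == b) : nat) = \sum_w (a == w) * (b == w).
  move=> a b; rewrite (bigD1 a) //= eqxx mul1n big1 ?addn0 ?(eq_sym b) // => w /negbTE H.
  by rewrite eq_sym H.
under eq_bigr => y _ do under eq_bigr => g _ do rewrite hb_consf !(consf_ext _ _ y) E big_distrr /=.
under eq_bigr do rewrite exchange_big /=.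
rewrite exchange_big /=; apply: eq_bigr => w _.
under eq_bigr do under eq_bigr do rewrite mulnCA [X in _ * X]mulnC.
have Hj : (j : nat) <= m.+1 := ltnW (ltn_ord j).
under eq_bigr do rewrite (@PW2 _ _ _ _ _ _ _ _ _ (ltnW Hij) Hj).
have -> : m.+1 - (j - i) = (m.+1 - j) + i.
  have := ltn_ord j; have := ltn_ord i; lia.
rewrite Nw_split big_distrr /=; apply: eq_bigr => y _.
by rewrite mulnCA; congr (_ * _); rewrite mulnC.
Qed.

Lemma leq_sum1 (I : finType) (P : pred I) (F : I -> nat) j : P j -> F j <= \sum_(i | P i) F i.
Proof. by move=> Pj; rewrite (bigD1 j) //= leq_addr. Qed.

Lemma noninj_bound (T : finType) (e : rel T) m :
  #|[set f : {ffun 'I_m.+1 -> T} | hb e f && ~~ injectiveb f]| <=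
  \sum_(i : 'I_m.+1) \sum_(j : 'I_m.+1 | i < j) \sum_f hb e f * (f i == f j).
Proof.
rewrite card_sum.
under [X in _ <= X]eq_bigr do rewrite exchange_big /=.
rewrite exchange_big /=; apply: leq_sum => f _.
case Hf: (hb e f) => //=; case: injectivePn => //= -[x [y xy Exy]].
wlog lt : x y xy Exy / x < y.
  move=> W; case: (ltngtP x y) => H; first exact: (W x y).
    by apply: (W y x) => //; rewrite eq_sym.
  by move: xy; rewrite (ord_inj H) eqxx.
by rewrite (bigD1 x) //= (bigD1 y) //= Exy eqxx mul1n -addnA.
Qed.

Lemma pair_sum_bound (G : nat -> nat) t : 3 <= t -> G 1 = 0 -> G t.-1 = 0 ->
  \sum_(i : 'I_t) \sum_(j : 'I_t | i < j) G (j - i) <= t * \sum_(2 <= k < t.-1) G k.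
Proof.
move=> Ht G1 Gt.
have H1 : \sum_(1 <= k < t) G k = \sum_(2 <= k < t.-1) G k.
  rewrite big_ltn ?G1 ?add0n; last lia.
  have -> : t = (t.-1).+1 by lia.
  rewrite big_nat_recr /= ?Gt ?addn0 //; lia.
rewrite -H1 -[X in _ <= X * _](card_ord t) -sum_nat_const.
apply: leq_sum => i _.
rewrite -(big_mkord (fun j => i < j) (fun j => G (j - i))).
rewrite (@big_cat_nat _ _ _ i.+1) //=.
rewrite big_nat_cond big_pred0 ?add0n; last first.
  by move=> j; apply/negbTE; rewrite negb_and; case: (ltnP j i.+1) => //= H; rewrite -leqNgt.
rewrite big_nat_cond.
rewrite (eq_bigl (fun j => i.+1 <= j < t)); last first.
  move=> j /=; apply/idP/idP => [/andP[]//|H]; rewrite H /=; by case/andP: H.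
have -> : \sum_(i.+1 <= j < t | i < j < t) G (j - i) = \sum_(i.+1 <= j < t) G (j - i).
  by rewrite [RHS]big_nat_cond; apply: eq_bigl => j; rewrite andbT.
rewrite -{1}(add1n i) big_addn.
under eq_bigr do rewrite addnK.
have := ltn_ord i => Hi.
rewrite (@big_cat_nat _ _ _ (t - i) 1 t) /=; [exact: leq_addr | lia | lia].
Qed.

Lemma sepq_uniq (n : nat) (X : {set 'I_n}) : uniq (enum X ++ enum (~: X)).
Proof.
rewrite cat_uniq !enum_uniq /= andbT; apply/hasPn => z.
by rewrite !mem_enum in_setC => /negbTE ->.
Qed.

Lemma sepq_size (n : nat) (X : {set 'I_n}) : size (enum X ++ enum (~: X)) = n.
Proof. by rewrite size_cat -!cardE cardsC card_ord. Qed.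

Lemma sepq_mem (n : nat) (X : {set 'I_n}) i : i \in enum X ++ enum (~: X).
Proof. by rewrite mem_cat !mem_enum in_setC orbN. Qed.

Lemma exists_sigma (n : nat) (X Y : {set 'I_n}) : #|X| = #|Y| ->
  exists sigma : 'I_n -> 'I_n, injective sigma /\ [set sigma i | i in X] = Y.
Proof.
move=> XY.
set ex := enum X ++ enum (~: X); set ey := enum Y ++ enum (~: Y).
have sx : size ex = n := sepq_size X.
have sy : size ey = n := sepq_size Y.
have ilt : forall i, index i ex < size ey by move=> i; rewrite sy -[X in _ < X]sx index_mem sepq_mem.
exists (fun i => nth i ey (index i ex)); split.
  move=> i j /= E.
  move: E; rewrite (set_nth_default j) ?ilt //.
  move/eqP; rewrite nth_uniq ?ilt ?sepq_uniq // => /eqP.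
  move=> H; apply: (@index_inj _ i ex i j) => //; by rewrite /ex mem_cat !mem_enum in_setC orbN.
apply/eqP; rewrite eqEcard card_imset; last first.
  move=> i j /= E.
  move: E; rewrite (set_nth_default j) ?ilt //.
  move/eqP; rewrite nth_uniq ?ilt ?sepq_uniq // => /eqP.
  move=> H; apply: (@index_inj _ i ex i j) => //; by rewrite /ex mem_cat !mem_enum in_setC orbN.
rewrite XY leqnn andbT; apply/subsetP => _ /imsetP [i Hi ->].
have Hi' : i \in enum X by rewrite mem_enum.
have Hlt : index i (enum X) < #|Y| by rewrite -XY cardE index_mem.
rewrite /ex index_cat Hi' /ey nth_cat cardE in Hlt *.
by rewrite Hlt -(mem_enum (mem Y)) mem_nth.
Qed.

Definition phi (n r : nat) (sigma : 'I_n -> 'I_n) (A : gvert n r) : gvert n r :=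
  insubd A [set sigma i | i in val A].

Lemma phi_val (n r : nat) (sigma : 'I_n -> 'I_n) (A : gvert n r) :
  injective sigma -> val (phi sigma A) = [set sigma i | i in val A].
Proof.
move=> inj; rewrite /phi insubdK //.
by rewrite unfold_in /= card_imset // (valP A).
Qed.

Lemma phi_inj (n r : nat) (sigma : 'I_n -> 'I_n) :
  injective sigma -> injective (@phi n r sigma).
Proof.
move=> inj A B E; apply: val_inj; apply: (imset_inj inj).
by rewrite -!phi_val // E.
Qed.

Lemma phi_adj (n r s : nat) (sigma : 'I_n -> 'I_n) (A B : gvert n r) :
  injective sigma -> gadj s (phi sigma A) (phi sigma B) = gadj s A B.
Proof.
move=> inj; rewrite /gadj !phi_val // -imsetI; last by move=> x y _ _; apply: inj.
by rewrite card_imset.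
Qed.

Lemma Nw_phi (n r s : nat) (sigma : 'I_n -> 'I_n) k (A B : gvert n r) :
  injective sigma -> Nw (@gadj n r s) k (phi sigma A) (phi sigma B) = Nw (@gadj n r s) k A B.
Proof.
move=> inj; elim: k A => [|k IH] A.
  by rewrite !Nw0 (inj_eq (phi_inj inj)).
rewrite !NwS (reindex_inj (phi_inj inj)) /=; apply: eq_bigr => w _.
by rewrite phi_adj // IH.
Qed.

Lemma trans_vert (n r : nat) (x y : gvert n r) :
  exists sigma : 'I_n -> 'I_n, injective sigma /\ phi sigma x = y.
Proof.
have [sigma [inj E]] : exists sigma : 'I_n -> 'I_n, injective sigma /\ [set sigma i | i in val x] = val y.
  by apply: exists_sigma; rewrite (eqP (valP x)) (eqP (valP y)).
exists sigma; split => //; apply: val_inj; by rewrite phi_val.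
Qed.

Lemma Nw_diag (n r s : nat) k (x y : gvert n r) :
  Nw (@gadj n r s) k y y = Nw (@gadj n r s) k x x.
Proof.
have [sigma [inj <-]] := trans_vert x y.
by rewrite Nw_phi.
Qed.

Lemma gdeg_sum (n r s : nat) (x : gvert n r) : gdeg s x = \sum_w gadj s x w.
Proof. by rewrite /gdeg card_sum. Qed.

Lemma gdeg_const (n r s : nat) (x y : gvert n r) : gdeg s y = gdeg s x.
Proof.
have [sigma [inj <-]] := trans_vert x y.
rewrite !gdeg_sum (reindex_inj (phi_inj inj)) /=; apply: eq_bigr => w _.
by rewrite phi_adj.
Qed.

Lemma gadj_irr (n r s : nat) (x : gvert n r) : (s < r)%N -> gadj s x x = false.
Proof.
move=> sr; rewrite /gadj setIid (eqP (valP x)).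
by apply/negbTE; rewrite neq_ltn sr orbT.
Qed.

Lemma Nw1_diag (n r s : nat) (x : gvert n r) : (s < r)%N -> Nw (@gadj n r s) 1 x x = 0%N.
Proof.
move=> sr; rewrite NwS big1 // => w _; rewrite Nw0.
by case: eqVneq => [->|]; rewrite ?gadj_irr ?muln0.
Qed.

Lemma nat_bound (n r s m : nat) (x : gvert n r) : (s < r)%N -> (3 <= m)%N ->
  let a := fun k => Nw (@gadj n r s) k x x in
  (monC n r s m.+1 <= homC n r s m.+1)%N /\
  homC n r s m.+1 = (#|{: gvert n r}| * a m.+1)%N /\
  (homC n r s m.+1 - monC n r s m.+1 <=
    m.+1 * \sum_(2 <= k < m) #|{: gvert n r}| * (a k * a (m.+1 - k)))%N.
Proof.
move=> sr m3 a.
set e := @gadj n r s.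
set N := #|{: gvert n r}|.
have hE : homC n r s m.+1 = #|[set f : {ffun 'I_m.+1 -> gvert n r} | hb e f]| by [].
have mE : monC n r s m.+1 = #|[set f : {ffun 'I_m.+1 -> gvert n r} | hb e f] :&: [set f : {ffun 'I_m.+1 -> gvert n r} | injectiveb f]|.
  by rewrite /monC; apply: eq_card => f; rewrite !inE.
have dE : [set f : {ffun 'I_m.+1 -> gvert n r} | hb e f] :\: [set f : {ffun 'I_m.+1 -> gvert n r} | injectiveb f] =
          [set f | hb e f && ~~ injectiveb f].
  by apply/setP => f; rewrite !inE andbC.
have cID := cardsID [set f : {ffun 'I_m.+1 -> gvert n r} | injectiveb f] [set f | hb e f].
split; first by rewrite hE mE -cID leq_addr.
split.
  rewrite hE hom_count; under eq_bigr => y _ do rewrite (Nw_diag s _ x y).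
  by rewrite sum_nat_const.
rewrite hE mE -cID addKn dE; apply: leq_trans (noninj_bound _ m) _.
set G := fun k => (N * (a k * a (m.+1 - k)))%N.
have PE : forall i : 'I_m.+1, \sum_(j : 'I_m.+1 | (i < j)%N) \sum_f hb e f * (f i == f j) =
                             \sum_(j : 'I_m.+1 | (i < j)%N) G (j - i).
  move=> i; apply: eq_bigr => j ij; rewrite pair_count //.
  under eq_bigr => w _ do rewrite (Nw_diag s _ x w) (Nw_diag s (m.+1 - (j - i)) x w).
  by rewrite sum_nat_const.
rewrite (eq_bigr _ (fun i _ => PE i)).
have := pair_sum_bound (G := G) (t := m.+1); apply.
- lia.
- by rewrite /G /a Nw1_diag // muln0.
- by rewrite /G /= /a (_ : (m.+1 - m)%N = 1%N) ?Nw1_diag ?muln0 //; lia.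
Qed.

Local Open Scope ring_scope.

Lemma transk_Nw (R : realFieldType) (n r s : nat) (x : gvert n r) k (y z : gvert n r) :
  transk R s k y z = (Nw (@gadj n r s) k y z)%:R / (gdeg s x)%:R ^+ k.
Proof.
elim: k y => [|k IH] y.
  by rewrite /= Nw0 expr0 divr1.
rewrite /= NwS natr_sum exprS invfM mulr_suml; apply: eq_bigr => w _.
rewrite /trans IH (gdeg_const s x y) natrM.
by rewrite !mulrA; congr (_ * _); rewrite -!mulrA; congr (_ * _); rewrite mulrC.
Qed.


Unset Implicit Arguments.

Theorem mainTheorem4 (R : realFieldType) (n r s t : nat) (x : gvert n r) :
  (s < r)%N -> (r < n)%N -> (4 <= t)%N ->
  let hom := (homC n r s t)%:R : R in
  let mon := (monC n r s t)%:R : R in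
  0 <= (hom - mon) / hom /\
  (hom - mon) / hom <=
    t%:R * \sum_(2 <= k < t.-1)
      (transk R s k x x * transk R s (t - k) x x / transk R s t x x).
Proof.
move=> sr rn t4 hom mon.
have [m tm] : exists m, t = m.+1 by exists t.-1; lia.
subst t.
have m3 : (3 <= m)%N by lia.
have [monle [homE bnd]] := nat_bound x sr m3.
set a := fun k => Nw (@gadj n r s) k x x in homE bnd.
set N := #|{: gvert n r}| in homE bnd.
have Npos : (0 < N)%N by apply/card_gt0P; exists x.
have Hge : 0 <= (hom - mon) / hom.
  by rewrite divr_ge0 // ?subr_ge0 ?ler_nat.
split => //.

set d := (gdeg s x)%:R : R.
case: (posnP (Nw (@gadj n r s) m.+1 x x)) => at0.
  have h0 : hom = 0 by rewrite /hom homE at0 muln0.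
  rewrite h0 invr0 mulr0; apply: mulr_ge0 => //; apply: sumr_ge0 => k _.
  by rewrite (transk_Nw R s x m.+1 x x) at0 mul0r invr0 mulr0.
have d0 : d != 0.
  rewrite pnatr_eq0; apply/eqP => dz.
  move: at0; rewrite NwS big1 // => w _.
  move: dz; rewrite gdeg_sum => /eqP; rewrite sum_nat_eq0 => /forallP /(_ w).
  by rewrite implyTb => /eqP ->.
have A0 : (Nw (@gadj n r s) m.+1 x x)%:R != 0 :> R by rewrite pnatr_eq0 -lt0n.
have N0 : N%:R != 0 :> R by rewrite pnatr_eq0 -lt0n.
have TE : forall k, (2 <= k < m)%N ->
   transk R s k x x * transk R s (m.+1 - k) x x / transk R s m.+1 x x =
   (Nw (@gadj n r s) k x x * Nw (@gadj n r s) (m.+1 - k) x x)%:R / (Nw (@gadj n r s) m.+1 x x)%:R.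
  move=> k /andP [k2 km].
  rewrite !(transk_Nw R s x) -/d natrM.
  have -> : d ^+ m.+1 = d ^+ k * d ^+ (m.+1 - k) by rewrite -exprD subnKC //; lia.
  have dk : d ^+ k != 0 by rewrite expf_neq0.
  have dk' : d ^+ (m.+1 - k) != 0 by rewrite expf_neq0.
  by field; rewrite dk dk' A0.
rewrite big_nat_cond (eq_bigr _ (fun k Hk => TE k (andP Hk).1)) -big_nat_cond.
rewrite -mulr_suml -natr_sum.
rewrite /hom /mon -natrB //.
have bnd' : ((homC n r s m.+1 - monC n r s m.+1)%:R : R) <=
   (m.+1 * (N * \sum_(2 <= k < m) (Nw (@gadj n r s) k x x * Nw (@gadj n r s) (m.+1 - k) x x)))%:R.
  by rewrite ler_nat big_distrr.
apply: le_trans (ler_wpM2r _ bnd') _.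
  by rewrite invr_ge0 ler0n.
rewrite homE /= !natrM; rewrite le_eqVlt; apply/orP; left; apply/eqP. by field; rewrite A0 N0.
Qed.
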